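(* Let $n\ge2$. For $j=0,\dots,\lfloor n/2\rfloor$, $$\pi(p_j)=\begin{cases}p_0&\text{if }j=0,\\ p_j-p_{j-1}&\text{if }0<j<\lfloor n/2\rfloor,\\ -p_{\lfloor n/2\rfloor-1}&\text{if }j=\lfloor n/2\rfloor,\end{cases}$$ (where on the right $p_i$ denotes the corresponding element for $\mathfrak{S}_{n-2}$). Therefore $\pi$ maps $\wp_n$ onto $\wp_{n-2}$ with a $1$-dimensional kernel spanned by $\sum_{j=0}^{\lfloor n/2\rfloor}p_j=\sum_{u\in\mathfrak{S}_n}u$.
   Context: For $u\in\mathfrak{S}_m$, $\mathrm{Peak}(u)=\{i\in[m-1]:u_{i-1}<u_i>u_{i+1}\}$ with $u_0=0$; $\mathcal{F}_m$: subsets of $[m-1]$ without two consecutive integers; $P_F=\sum_{\mathrm{Peak}(u)=F}u$; $\mathcal{P}_m=\mathrm{span}\{P_F\}$, $\mathcal{P}_0=\mathcal{P}_1=\mathbb{Q}$. $p_j=\sum_{u\in\mathfrak{S}_m,\#\mathrm{Peak}(u)=j}u$ ($0\le j\le\lfloor m/2\rfloor$) and $\wp_m=\mathrm{span}\{p_j\}$. $\pi:\mathcal{P}_n\to\mathcal{P}_{n-2}$ is linear: $P_F\mapsto P_{F-2}$ if $1,2\notin F$; $P_F\mapsto-P_{(F\setminus\{1\})-2}$ if $1\in F$; $P_F\mapsto0$ if $2\in F$ (here $F-2=\{f-2:f\in F\}$). *)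

(* Defs.v *)
From HB Require Import structures.
From mathcomp Require Import all_boot all_order all_fingroup all_algebra.
Set Implicit Arguments. Unset Strict Implicit. Unset Printing Implicit Defensive.
Import GRing.Theory.
Local Open Scope ring_scope.

(* The group algebra Q[S_m] is modelled as finite functions 'S_m -> rat
   (coefficient of each permutation). *)
Notation QS m := {ffun 'S_m -> rat^o}.

Definition delta (m : nat) (u : 'S_m) : QS m := [ffun v => (v == u)%:R].

(* one-line notation: letter u i = u_i in {1..m} for 1 <= i <= m, and u_0 = 0
   (also 0 for i > m, never used).  Permutations of 'I_m are shifted by +1. *)
Definition letter (m : nat) (u : 'S_m) (i : nat) : nat :=
  if i is k.+1 then (if @insub nat (fun x => x < m)%N _ k is Some k' then (u k').+1 else 0%N)
  else 0%N.

Definition peak (m : nat) (u : 'S_m) : seq nat :=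
  [seq i <- iota 1 m.-1 | (letter u i.-1 < letter u i)%N && (letter u i.+1 < letter u i)%N].

Definition inF (m : nat) (F : seq nat) : bool :=
  [&& sorted ltn F, all (fun i => (1 <= i <= m.-1)%N) F & all (fun i => i.+1 \notin F) F].

Definition PF (m : nat) (F : seq nat) : QS m := \sum_(u : 'S_m | peak u == F) delta u.

Definition pj (m : nat) (j : nat) : QS m := \sum_(u : 'S_m | size (peak u) == j) delta u.

Definition in_wp (m : nat) (x : QS m) : Prop :=
  exists c : nat -> rat, x = \sum_(j < m./2.+1) c j *: pj m j.

Definition shift2 (F : seq nat) : seq nat := map (subn^~ 2%N) F.

Definition peak_proj_spec (n : nat) (piF : QS n -> QS (n - 2)%N) : Prop :=
  (forall (a : rat) (x y : QS n), piF (a *: x + y) = a *: piF x + piF y) /\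
  (forall F, inF n F ->
     piF (PF n F) =
       if (1%N \notin F) && (2%N \notin F) then PF (n - 2)%N (shift2 F)
       else if 1%N \in F then - PF (n - 2)%N (shift2 (rem 1%N F))
       else 0).

(* Main.v *)
Require Import Defs.
From mathcomp Require Import all_boot all_order all_fingroup all_algebra.
From mathcomp Require Import zify.
Import GRing.Theory.
Local Open Scope ring_scope.
Set Implicit Arguments. Unset Strict Implicit. Unset Printing Implicit Defensive.

Fixpoint good (lo hi : nat) (F : seq nat) : bool :=
  if F is x :: F' then ((lo <= x <= hi)%N && good x.+2 hi F') else true.

Lemma good_all lo hi F : good lo hi F -> all (fun y => lo <= y <= hi)%N F.
Proof.
elim: F lo => //= x F IH lo /andP[/andP[h1 h2] /IH /allP hF].
rewrite h1 h2 /=; apply/allP => y /hF /andP[a b]; apply/andP; split => //; lia.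
Qed.

Lemma good_le a b hi F : (b <= a)%N -> good a hi F -> good b hi F.
Proof. case: F => //= x F hab /andP[/andP[h1 h2] ->]; rewrite h2 andbT; lia. Qed.

Lemma inF_goodE lo hi F :
  [&& sorted ltn F, all (fun i => lo <= i <= hi)%N F & all (fun i => i.+1 \notin F) F]
  = good lo hi F.
Proof.
elim: F lo => //= x F IH lo.
rewrite -IH (path_sortedE ltn_trans) in_cons.
apply/idP/idP.
- case/and3P => /andP[/allP hx hs] /andP[hxr ha] /andP[hx1 /allP hn].
  rewrite hxr /= hs /=.
  apply/andP; split.
  + apply/allP => y yF; move/allP: ha => /(_ y yF) /andP[_ ->]; rewrite andbT.
    have := hx y yF; move: hx1; rewrite negb_or => /andP[_ h].
    have : y != x.+1 by apply/eqP => e; rewrite -e yF in h.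
    rewrite /ltn /=; lia.
  + apply/allP => y yF; have := hn y yF; rewrite in_cons negb_or => /andP[_ ->] //.
- case/andP => hxr /and3P[hs ha /allP hn].
  have hx : all (ltn x) F.
    apply/allP => y yF; move/allP: ha => /(_ y yF) /andP[a _]; rewrite /ltn /=; lia.
  rewrite hx hs hxr /=.
  apply/andP; split.
  + apply/allP => y yF; move/allP: ha => /(_ y yF) /andP[a ->]; rewrite andbT; move: hxr => /andP[h _]; lia.
  + rewrite negb_or; apply/andP; split; first (apply/andP; split).
    * apply/eqP; lia.
    * apply/negP => yF; move/allP: ha => /(_ _ yF) /andP[a _]; lia.
    * apply/allP => y yF; rewrite in_cons negb_or hn // andbT.
      move/allP: hx => /(_ y yF); rewrite /ltn /=; lia.
Qed.

Lemma inF_good m F : inF m F = good 1 m.-1 F.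
Proof. by rewrite /inF inF_goodE. Qed.

Fixpoint subseqs (s : seq nat) : seq (seq nat) :=
  if s is x :: s' then map (cons x) (subseqs s') ++ subseqs s' else [:: [::]].

Lemma mem_subseqs s F : (F \in subseqs s) = subseq F s.
Proof.
elim: s F => [|x s IH] F /=.
  by case: F => [|y F]; rewrite ?inE.
rewrite mem_cat IH; case: F => [|y F] /=; first by rewrite sub0seq orbT.
have inj : injective (cons x) by move=> a b [].
case: eqP => [->|ne].
- rewrite mem_map // IH orb_idr //; apply: subseq_trans; exact: subseq_cons.
- have -> // : (y :: F \in map (cons x) (subseqs s)) = false.
  by apply/mapP => -[a _ [e _]].
Qed.

Lemma good_subseq k lo hi F : (hi < lo + k)%N -> good lo hi F -> subseq F (iota lo k).
Proof.
elim: k lo F => [|k IH] lo [|x F] //=.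
- move=> h /andP[/andP[a b] _]; lia.
- move=> h /andP[hx hg]; case: eqP => [e|ne].
  + apply: IH; first lia. by apply: good_le hg; lia.
  + apply: IH; first lia. rewrite /= hg andbT; move/eqP: ne hx; lia.
Qed.

Lemma good_size lo hi F : good lo hi F -> (size F <= (hi.+2 - lo) %/ 2)%N.
Proof.
elim: F lo => //= x F IH lo /andP[/andP[a b] /IH h]; lia.
Qed.

Definition U m := undup (filter (good 1 m.-1) (subseqs (iota 1 m.-1))).

Lemma mem_U m F : (F \in U m) = good 1 m.-1 F.
Proof.
rewrite /U mem_undup mem_filter mem_subseqs.
apply/andP/idP => [[]//|h]; split => //; apply: good_subseq h; lia.
Qed.

Lemma uniq_U m : uniq (U m). Proof. exact: undup_uniq. Qed.

Lemma peak_inF m (u : 'S_m) : inF m (peak u).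
Proof.
rewrite /inF /peak; apply/and3P; split.
- apply: sorted_filter; [exact: ltn_trans| exact: iota_ltn_sorted].
- by apply/allP => i; rewrite mem_filter mem_iota => /andP[_ h]; lia.
- apply/allP => i; rewrite mem_filter => /andP[/andP[_ h1] _].
  rewrite mem_filter; apply/negP => /andP[/andP[h2 _] _]; move: h1 h2 => /=; lia.
Qed.

Lemma peak_good m (u : 'S_m) : good 1 m.-1 (peak u).
Proof. by rewrite -inF_good peak_inF. Qed.

Lemma size_peak m (u : 'S_m) : (size (peak u) <= m./2)%N.
Proof. have := good_size (peak_good u); rewrite -divn2; lia. Qed.

Lemma pj_U m j : pj m j = \sum_(F <- U m | size F == j) PF m F.
Proof.
rewrite /PF (exchange_big_dep (fun u : 'S_m => size (peak u) == j)) /=; last first.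
  by move=> F u /eqP <- /eqP ->.
rewrite /pj; apply: eq_bigr => u hu.
rewrite big_mkcond (bigD1_seq (peak u)) /= ?mem_U ?peak_good ?uniq_U //.
rewrite hu eqxx /= big1 ?addr0 // => F /negbTE hF.
by rewrite [peak u == F]eq_sym hF andbF.
Qed.

Lemma pj_big m j : (m./2 < j)%N -> pj m j = 0.
Proof.
move=> h; rewrite /pj big_pred0 // => u; apply/negbTE/eqP => e.
have := size_peak u; lia.
Qed.

Section Lin.
Variables (n : nat) (piF : QS n -> QS (n - 2)%N) (hpi : peak_proj_spec piF).

Lemma piF0 : piF 0 = 0.
Proof.
have := hpi.1 1 0 0; rewrite !scale1r addr0 => /(congr1 (fun z => z - piF 0)).
by rewrite addrK subrr.
Qed.

Lemma piFD x y : piF (x + y) = piF x + piF y.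
Proof. by have := hpi.1 1 x y; rewrite !scale1r. Qed.

Lemma piFZ a x : piF (a *: x) = a *: piF x.
Proof. by have := hpi.1 a x 0; rewrite !addr0 piF0 addr0. Qed.

Lemma piF_sum (I : Type) (r : seq I) (P : pred I) (E : I -> QS n) :
  piF (\sum_(i <- r | P i) E i) = \sum_(i <- r | P i) piF (E i).
Proof. exact: (big_morph piF piFD piF0). Qed.

End Lin.

Lemma good_raise lo b hi F : good lo hi F -> all (fun y => b <= y)%N F -> good b hi F.
Proof. case: F => //= x F /andP[/andP[h1 h2] ->] /andP[h3 _]; rewrite h2 h3. done. Qed.

Lemma good_shift lo hi F : (2 <= lo)%N -> good lo hi F -> good (lo - 2) (hi - 2) (shift2 F).
Proof.
elim: F lo => //= x F IH lo hlo /andP[/andP[h1 h2] hg].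
have := IH x.+2 ltac:(lia) hg.
have -> : (x.+2 - 2 = (x - 2).+2)%N by lia.
move=> ->; rewrite andbT; apply/andP; split; lia.
Qed.

Lemma good_unshift lo hi G : good lo hi G -> good lo.+2 hi.+2 (map (addn 2) G).
Proof.
elim: G lo => //= x G IH lo /andP[/andP[h1 h2] hg].
have := IH _ hg; rewrite -[(2 + x).+2]/((x.+2).+2) => ->.
rewrite andbT; apply/andP; split; lia.
Qed.

Lemma shift2K G : shift2 (map (addn 2) G) = G.
Proof. by rewrite /shift2 -map_comp map_id_in // => x _ /=; lia. Qed.

Lemma unshift2K F : all (fun y => 2 <= y)%N F -> map (addn 2) (shift2 F) = F.
Proof. rewrite /shift2 -map_comp => h; apply: map_id_in => x /(allP h) /=; lia. Qed.

Lemma good_nil lo hi G : good lo hi G -> (hi < lo)%N -> G = [::].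
Proof. case: G => //= x G /andP[/andP[h1 h2] _]; lia. Qed.

Lemma three_le n F : F \in U n -> (1 \notin F) && (2 \notin F) -> all (fun y => 3 <= y)%N F.
Proof.
rewrite mem_U => /good_all /allP h /andP[h1 h2]; apply/allP => y yF.
have n1 : y != 1%N by apply: contraNneq h1 => e; move: yF; rewrite e.
have n2 : y != 2%N by apply: contraNneq h2 => e; move: yF; rewrite e.
have := h y yF; lia.
Qed.

Lemma all32 F : all (fun y => 3 <= y)%N F -> all (fun y => 2 <= y)%N F.
Proof. apply: sub_all => y /= h; exact: ltnW. Qed.

Lemma unshift_good n G : (2 <= n)%N -> good 1 (n-2).-1 G -> good 3 n.-1 (map (addn 2) G).
Proof.
move=> hn hG; case: (leqP 3 n) => h.
  by have := good_unshift hG; have -> : ((n-2).-1.+2 = n.-1)%N by lia.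
by rewrite (good_nil hG) //; lia.
Qed.

Lemma permA n : (2 <= n)%N ->
  perm_eq (map shift2 [seq F <- U n | (1 \notin F) && (2 \notin F)]) (U (n-2)).
Proof.
move=> hn; apply: uniq_perm.
- rewrite map_inj_in_uniq ?filter_uniq ?uniq_U // => F1 F2.
  rewrite !mem_filter => /andP[c1 i1] /andP[c2 i2] e.
  by rewrite -(unshift2K (all32 (three_le i1 c1))) -(unshift2K (all32 (three_le i2 c2))) e.
- exact: uniq_U.
- move=> G; rewrite mem_U; apply/mapP/idP.
  + case=> F; rewrite mem_filter => /andP[c i] ->.
    have i' : good 1 n.-1 F by rewrite -mem_U.
    have := good_shift (isT : (2 <= 3)%N) (good_raise i' (three_le i c)).
    by have -> : (n.-1 - 2 = (n-2).-1)%N by lia.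
  + move=> hG; exists (map (addn 2) G); last by rewrite shift2K.
    have hF := unshift_good hn hG.
    rewrite mem_filter mem_U (good_le _ hF) // andbT.
    have /allP ha := good_all hF; apply/andP; split; apply/negP => /ha; lia.
Qed.

Lemma headB n F : F \in U n -> 1%N \in F -> exists F', F = 1%N :: F' /\ good 3 n.-1 F'.
Proof.
rewrite mem_U; case: F => [|x F'] //= /andP[/andP[h1 h2] hg]; rewrite in_cons.
case: eqP => [e|ne] /= h; first by subst x; exists F'; split.
by have /allP := good_all hg; move/(_ 1%N h); lia.
Qed.

Lemma all_good3 hi F : good 3 hi F -> all (fun y => 2 <= y)%N F.
Proof. move/good_all; apply: sub_all => y /andP[h _]; exact: ltnW. Qed.

Lemma permB n : (2 <= n)%N ->
  perm_eq (map (fun F => shift2 (rem 1%N F)) [seq F <- U n | 1%N \in F]) (U (n-2)).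
Proof.
move=> hn; apply: uniq_perm.
- rewrite map_inj_in_uniq ?filter_uniq ?uniq_U // => F1 F2.
  rewrite !mem_filter => /andP[c1 /headB /(_ c1) [F1' [-> g1]]].
  move=> /andP[c2 /headB /(_ c2) [F2' [-> g2]]] /= e.
  by rewrite -(unshift2K (all_good3 g1)) -(unshift2K (all_good3 g2)) e.
- exact: uniq_U.
- move=> G; rewrite mem_U; apply/mapP/idP.
  + case=> F; rewrite mem_filter => /andP[c /headB /(_ c) [F' [-> g]]] -> /=.
    have := good_shift (isT : (2 <= 3)%N) g.
    by have -> : (n.-1 - 2 = (n-2).-1)%N by lia.
  + move=> hG; exists (1%N :: map (addn 2) G); last by rewrite /= shift2K.
    have hF := unshift_good hn hG.
    rewrite mem_filter mem_U /= hF andbT; lia.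
Qed.

Lemma piF_pj n (piF : QS n -> QS (n - 2)%N) (hpi : peak_proj_spec piF) j : (2 <= n)%N ->
  piF (pj n j) = pj (n-2) j - (if j is j'.+1 then pj (n-2) j' else 0).
Proof.
move=> hn.
rewrite pj_U (piF_sum hpi) big_seq_cond.
rewrite (eq_bigr (fun F => if (1%N \notin F) && (2%N \notin F) then PF (n-2) (shift2 F)
   else if 1%N \in F then - PF (n-2) (shift2 (rem 1%N F)) else 0)); last first.
  by move=> F /andP[hF _]; rewrite hpi.2 // inF_good -mem_U.
rewrite -big_seq_cond.
have -> : \sum_(F <- U n | size F == j) (if (1%N \notin F) && (2%N \notin F) then PF (n-2) (shift2 F)
   else if 1%N \in F then - PF (n-2) (shift2 (rem 1%N F)) else 0) =
   \sum_(F <- [seq F <- U n | (1%N \notin F) && (2%N \notin F)] | size F == j) PF (n-2) (shift2 F)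
   - \sum_(F <- [seq F <- U n | 1%N \in F] | size F == j) PF (n-2) (shift2 (rem 1%N F)).
  rewrite !big_filter_cond big_mkcond [X in _ = X - _]big_mkcond [X in _ = _ - X]big_mkcond -sumrB.
  apply: eq_bigr => F _.
  case: (size F == j); case h1: (1%N \in F); case h2: (2%N \in F); rewrite /= ?subr0 ?sub0r //.
congr (_ - _).
  rewrite (eq_bigl (fun F => size (shift2 F) == j)); last by move=> F; rewrite size_map.
  by rewrite -(big_map shift2 (fun G => size G == j) (PF (n-2))) (perm_big _ (permA hn)) -pj_U.
case: j => [|j].
  rewrite big_seq_cond big1 // => F /andP[]; rewrite mem_filter => /andP[c _].
  by case: F c.
rewrite big_seq_cond (eq_bigl (fun F => (F \in [seq F <- U n | 1%N \in F]) &&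
   (size (shift2 (rem 1%N F)) == j))); last first.
  move=> F; case hF: (F \in _) => //=; move: hF; rewrite mem_filter => /andP[c _].
  by rewrite size_map size_rem //; case: (F) c.
by rewrite -(big_seq_cond (fun F => size (shift2 (rem 1%N F)) == j)) -(big_map (fun F => shift2 (rem 1%N F)) (fun G => size G == j)) (perm_big _ (permB hn)) -pj_U.
Qed.

Lemma piF_comb n (piF : QS n -> QS (n - 2)%N) (hpi : peak_proj_spec piF) (c : nat -> rat) :
  (2 <= n)%N ->
  piF (\sum_(j < n./2.+1) c j *: pj n j) = \sum_(j < n./2) (c j - c j.+1) *: pj (n-2) j.
Proof.
move=> hn; rewrite (piF_sum hpi).
under eq_bigr do rewrite (piFZ hpi) (piF_pj hpi _ hn) scalerBr.
rewrite sumrB big_ord_recr big_ord_recl /= (pj_big (m := (n-2)%N)); last first.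
  rewrite -!divn2; lia.
rewrite scaler0 addr0 scaler0 add0r -sumrB; apply: eq_bigr => i _.
by rewrite /bump add0n scalerBl.
Qed.
Lemma oddE x : odd x = (x %% 2 == 1)%N.
Proof. by rewrite modn2; case: (odd x). Qed.

Definition gw j k := if (k < j.*2)%N then (if odd k then k.-1 else k.+1) else k.

Lemma gw_lt j m k : (j.*2 <= m)%N -> (k < m)%N -> (gw j k < m)%N.
Proof. rewrite /gw !oddE -!mul2n; repeat case: ifP => ?; lia. Qed.

Lemma gwK j k : gw j (gw j k) = k.
Proof. rewrite /gw !oddE -!mul2n; case h1: (k < 2 * j)%N; case h2: (k %% 2 == 1)%N; rewrite /=; repeat case: ifP => ?; lia. Qed.

Section W.
Variables (m j : nat) (hj : (j.*2 <= m)%N).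

Definition fw (k : 'I_m) : 'I_m := insubd k (gw j k).

Lemma fw_val k : val (fw k) = gw j k.
Proof. by rewrite val_insubd gw_lt. Qed.

Lemma fw_inj : injective fw.
Proof. move=> a b e; apply: val_inj; by rewrite -[val a](gwK j) -[val b](gwK j) -!fw_val e. Qed.

Definition w : 'S_m := perm fw_inj.

Lemma letter_w i : (i < m)%N -> letter w i.+1 = (gw j i).+1.
Proof.
move=> hi; rewrite /letter insubT /= permE fw_val //.
Qed.

End W.

Lemma count_odd j k : count (fun i => odd i && (i < j.*2)%N) (iota 1 k) = minn j (k.+1 %/ 2).
Proof.
elim: k => [|k IH]; first by rewrite /= minn0.
rewrite -(addn1 k) iotaD count_cat IH /= addn0 oddE -mul2n.
rewrite add0n; case: (k %% 2 =P 1)%N => h1; case: (ltnP (1+k) (2*j)) => h2 /=; lia.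
Qed.

Lemma peak_w m j (hj : (j.*2 <= m)%N) : size (peak (w hj)) = j.
Proof.
rewrite /peak (@eq_in_filter _ _ (fun i => odd i && (i < j.*2)%N)); last first.
  move=> i; rewrite mem_iota => /andP[h1 h2].
  case: i h1 h2 => [|k] // _ h2.
  rewrite !letter_w; try lia.
  case: k h2 => [|k] h2.
    rewrite /= /gw !oddE -!mul2n; repeat case: ifP => ?; lia.
  have -> : (k.+2).-1 = k.+1 by [].
  rewrite letter_w; last lia.
  rewrite /gw !oddE -!mul2n.
  case h1: (k < 2 * j)%N; case h3: (k %% 2 == 1)%N; rewrite /=; repeat case: ifP => ?; lia.
rewrite size_filter count_odd -mul2n in hj *; lia.
Qed.

Lemma pj_ev m j (u : 'S_m) : pj m j u = (size (peak u) == j)%:R.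
Proof.
rewrite /pj sum_ffunE; case h: (size (peak u) == j).
- rewrite (bigD1 u) //= ffunE eqxx big1 ?addr0 // => v /andP[_ hv].
  by rewrite ffunE eq_sym (negbTE hv).
- rewrite big1 // => v hv; rewrite ffunE; case: eqP => // e; subst v.
  by rewrite h in hv.
Qed.

Lemma scale_ffE m (a : rat) (f : QS m) u : (a *: f) u = a * f u.
Proof. exact: ffunE. Qed.

Lemma comb_ev m K (d : nat -> rat) (u : 'S_m) (hK : (size (peak u) < K)%N) :
  (\sum_(i < K) d i *: pj m i) u = d (size (peak u)).
Proof.
rewrite sum_ffunE (bigD1 (Ordinal hK)) //= scale_ffE pj_ev eqxx mulr1 big1 ?addr0 // => i hi.
rewrite scale_ffE pj_ev (_ : (_ == _) = false) ?mulr0 //; apply/negbTE.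
by apply: contra hi => /eqP e; apply/eqP/val_inj; rewrite /= e.
Qed.

Theorem proposition6p11 (n : nat) (hn : (2 <= n)%N)
    (piF : QS n -> QS (n - 2))
    (hpi : peak_proj_spec piF) :
  (forall j : nat, (j <= n./2)%N ->
     piF (pj n j) =
       if j == 0%N then pj (n - 2) 0
       else if (j < n./2)%N then pj (n - 2) j - pj (n - 2) j.-1
       else - pj (n - 2) (n./2).-1) /\
  (forall x, in_wp x -> in_wp (piF x)) /\
  (forall y, in_wp y -> exists x, in_wp x /\ piF x = y) /\
  (forall x, in_wp x ->
     (piF x = 0 <-> exists c : rat, x = c *: \sum_(j < n./2.+1) pj n j)) /\
  \sum_(j < n./2.+1) pj n j = \sum_(u : 'S_n) delta u /\
  \sum_(j < n./2.+1) pj n j != 0.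
Proof.
have hN : ((n-2)./2.+1 = n./2)%N by rewrite -!divn2; lia.
have hS : \sum_(j < n./2.+1) pj n j = \sum_(u : 'S_n) delta u.
  rewrite /pj (exchange_big_dep xpredT) //=; apply: eq_bigr => u _.
  have hu : (size (peak u) < n./2.+1)%N by rewrite ltnS size_peak.
  by rewrite (big_pred1 (Ordinal hu)) // => j /=.
split.
  move=> j hj; rewrite (piF_pj hpi _ hn).
  case: j hj => [|j] hj /=; first by rewrite subr0.
  case: ltnP => h //.
  have -> : j = (n./2).-1 by lia.
  rewrite pj_big ?sub0r //; rewrite -!divn2 in hj *; lia.
split.
  move=> x [c ->]; exists (fun j => c j - c j.+1).
  by rewrite (piF_comb hpi _ hn) hN.
split.
  move=> y [d ->].
  pose e i := \sum_(i <= k < n./2) d k.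
  exists (\sum_(j < n./2.+1) e j *: pj n j); split; first by exists e.
  rewrite (piF_comb hpi _ hn) hN; apply: eq_bigr => i _.
  by rewrite /e (big_ltn (ltn_ord i)) addrK.
split.
  move=> x [c ->]; split.
  - move=> h0.
    have hc : forall k, (k < n./2)%N -> c k = c k.+1.
      move=> k hk; have hw : (k.*2 <= n - 2)%N by rewrite -!divn2 -mul2n in hk *; lia.
      move: h0; rewrite (piF_comb hpi _ hn) => /(congr1 (fun f : QS (n-2) => f (w hw))).
      rewrite (@comb_ev _ _ (fun j => c j - c j.+1)) ?peak_w // ffunE => /eqP.
      by rewrite subr_eq0 => /eqP.
    have hc0 : forall k, (k <= n./2)%N -> c k = c 0%N.
      elim=> [//|k IH] hk; rewrite -hc ?IH //; lia.
    exists (c 0%N); rewrite scaler_sumr; apply: eq_bigr => j _.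
    by rewrite hc0 // -ltnS.
  - case=> a ->.
    rewrite (piFZ hpi) (_ : \sum_(j < n./2.+1) pj n j = \sum_(j < n./2.+1) (fun _ => 1) j *: pj n j).
      by rewrite (@piF_comb _ _ hpi (fun _ => 1) hn) big1 ?scaler0 // => i _; rewrite subrr scale0r.
    by apply: eq_bigr => i _; rewrite scale1r.
split=> //.
rewrite (_ : \sum_(j < n./2.+1) pj n j = \sum_(j < n./2.+1) (fun _ => 1) j *: pj n j).
  apply/eqP => /(congr1 (fun f : QS n => f 1%g)).
  rewrite (@comb_ev _ _ (fun _ => 1)) ?ffunE ?ltnS ?size_peak //.
by apply: eq_bigr => i _; rewrite scale1r.
Qed.
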